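(* Let $p$ be a prime with $p\equiv 1\pmod 6$. Then there exists a Latin square $L$ of order $p$ that is orthogonal to $B_p$ and contains an intercalate.
   Context: $B_p$ is the Latin square of order $p$ with symbol $i+j\pmod p$ in cell $(i,j)$, $i,j\in\mathbb{Z}_p$. Two Latin squares of order $p$ are orthogonal if superimposing them yields each of the $p^2$ ordered pairs of symbols exactly once. An intercalate in a Latin square $L$ is a $2\times 2$ subsquare: rows $r_1\neq r_2$ and columns $c_1\neq c_2$ such that $L(r_1,c_1)=L(r_2,c_2)$ and $L(r_1,c_2)=L(r_2,c_1)$. *)

(* Defs.v *)
From mathcomp Require Import all_boot.
Set Implicit Arguments. Unset Strict Implicit. Unset Printing Implicit Defensive.

Definition square (n : nat) := 'I_n -> 'I_n -> 'I_n.

Definition latin (n : nat) (L : square n) : Prop :=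
  (forall i : 'I_n, injective (L i)) /\
  (forall j : 'I_n, injective (fun i => L i j)).

(* Orthogonality: superimposing yields each ordered pair exactly once, i.e. the
   map (i,j) |-> (L i j, M i j) is injective on the n^2 cells (hence bijective
   onto the n^2 ordered pairs). *)
Definition orthogonal (n : nat) (L M : square n) : Prop :=
  forall i1 j1 i2 j2 : 'I_n,
    L i1 j1 = L i2 j2 -> M i1 j1 = M i2 j2 -> i1 = i2 /\ j1 = j2.

Definition Bsq (p : nat) (Hp : 0 < p) : square p :=
  fun i j => Ordinal (ltn_pmod (i + j) Hp).

Definition has_intercalate (n : nat) (L : square n) : Prop :=
  exists r1 r2 c1 c2 : 'I_n,
    r1 != r2 /\ c1 != c2 /\ L r1 c1 = L r2 c2 /\ L r1 c2 = L r2 c1.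

(* Main.v *)
Require Import Defs.
From mathcomp Require Import all_boot.
From mathcomp Require Import all_algebra all_fingroup pgroup finfield.
From mathcomp Require Import ring zify.
Require Import Defs.
Set Implicit Arguments. Unset Strict Implicit. Unset Printing Implicit Defensive.
Import GRing.Theory FinRing.Theory.

Local Open Scope ring_scope.

Lemma omega_ex (p : nat) (Hp : prime p) (Hmod : p = 1 %[mod 6]) :
  exists w : 'F_p, w ^+ 3 = 1 /\ w != 1.
Proof.
have d3 : (3 %| #|[set: {unit 'F_p}]|)%N.
  rewrite card_finField_unit card_Fp //.
  move: Hmod; rewrite /= => Hm.
  have -> : p.-1 = (6 * (p %/ 6))%N.
    have := divn_eq p 6; rewrite Hm /=; have := prime_gt0 Hp; lia.
  by rewrite dvdn_mulr.
have [x _ ox] := Cauchy (isT : prime 3) d3.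
exists (val x); split.
  by rewrite -val_unitX -ox expg_order.
apply/negP => /eqP x1.
have : x = 1%g by apply: val_inj; rewrite x1.
by move=> e; move: ox; rewrite e order1.
Qed.

Lemma omega_sum (p : nat) (w : 'F_p) : w ^+ 3 = 1 -> w != 1 -> w ^+ 2 + w + 1 = 0.
Proof.
move=> h3 h1.
have : (w - 1) * (w ^+ 2 + w + 1) = 0.
  have -> : (w - 1) * (w ^+ 2 + w + 1) = w ^+ 3 - 1 by ring.
  by rewrite h3 subrr.
by move/eqP; rewrite mulf_eq0 subr_eq0 (negbTE h1) /= => /eqP.
Qed.

Definition inH (p : nat) (w u : 'F_p) : bool := (u == 1) || (u == w) || (u == w ^+ 2).
Definition Fm (p : nat) (w u : 'F_p) : 'F_p := if inH w u then w ^+ 2 * u else w * u.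

Lemma inH_mul (p : nat) (w u : 'F_p) : w ^+ 3 = 1 -> inH w u -> inH w (w * u).
Proof.
move=> h3; rewrite /inH => /orP[/orP[]|] /eqP ->.
- by rewrite mulr1 eqxx orbT.
- by rewrite -expr2 eqxx !orbT.
- by rewrite -exprS h3 eqxx.
Qed.

Lemma w_ne0 (p : nat) (w : 'F_p) : w ^+ 3 = 1 -> w != 0.
Proof. by move=> h3; apply/eqP => w0; move: h3; rewrite w0 expr0n /= => /eqP; rewrite eq_sym oner_eq0. Qed.

Lemma cross (p : nat) (w u v : 'F_p) : w ^+ 3 = 1 -> w ^+ 2 * u = w * v -> v = w * u.
Proof.
move=> h3 e.
have -> : v = w ^+ 3 * v by rewrite h3 mul1r.
have -> : w ^+ 3 * v = w ^+ 2 * (w * v) by ring.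
rewrite -e.
have -> : w ^+ 2 * (w ^+ 2 * u) = w * (w ^+ 3 * u) by ring.
by rewrite h3 mul1r.
Qed.

Lemma Fm_inj (p : nat) (w : 'F_p) : w ^+ 3 = 1 -> injective (Fm w).
Proof.
move=> h3 u v; rewrite /Fm.
have w20 : w ^+ 2 != 0 by rewrite expf_neq0 // w_ne0.
case hu: (inH w u); case hv: (inH w v).
- by apply: mulfI.
- move=> e; have ev := cross h3 e.
  by move: hv; rewrite ev (inH_mul h3 hu).
- move=> e; have eu := cross h3 (esym e).
  by move: hu; rewrite eu (inH_mul h3 hv).
- by apply: mulfI; rewrite w_ne0.
Qed.

Lemma Gm_inj (p : nat) (w : 'F_p) : w ^+ 3 = 1 -> w != 1 -> injective (fun u => u + Fm w u).
Proof.
move=> h3 h1 u v; rewrite /Fm.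
have hs := omega_sum h3 h1.
have eH : forall x : 'F_p, x + w ^+ 2 * x = - (w * x).
  move=> x; have -> : x + w ^+ 2 * x = (w ^+ 2 + w + 1) * x - w * x by ring.
  by rewrite hs mul0r sub0r.
have eN : forall x : 'F_p, x + w * x = - (w ^+ 2 * x).
  move=> x; have -> : x + w * x = (w ^+ 2 + w + 1) * x - w ^+ 2 * x by ring.
  by rewrite hs mul0r sub0r.
have w20 : w ^+ 2 != 0 by rewrite expf_neq0 // w_ne0.
case hu: (inH w u); case hv: (inH w v).
- by rewrite !eH => /oppr_inj; apply: mulfI; rewrite w_ne0.
- rewrite eH eN => /oppr_inj e.
  have ev : v = w * (w * u).
    by rewrite (cross h3 (esym e)) -[LHS]mul1r -h3; ring.
  by move: hv; rewrite ev (inH_mul h3 (inH_mul h3 hu)).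
- rewrite eN eH => /oppr_inj e.
  have eu : u = w * (w * v).
    by rewrite (cross h3 e) -[LHS]mul1r -h3; ring.
  by move: hu; rewrite eu (inH_mul h3 (inH_mul h3 hv)).
- by rewrite !eN => /oppr_inj; apply: mulfI.
Qed.

Definition toF (p : nat) (i : 'I_p) : 'F_p := (i : nat)%:R.

Lemma fromF_lt (p : nat) (Hp : prime p) (x : 'F_p) : (x < p)%N.
Proof. exact: (leq_trans (ltn_ord x) (eq_leq (Fp_cast Hp))). Qed.

Definition fromF (p : nat) (Hp : prime p) (x : 'F_p) : 'I_p := Ordinal (fromF_lt Hp x).

Lemma fromF_toF (p : nat) (Hp : prime p) (i : 'I_p) : fromF Hp (toF i) = i.
Proof. by apply: val_inj; rewrite /= val_Fp_nat // modn_small. Qed.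

Lemma toF_fromF (p : nat) (Hp : prime p) (x : 'F_p) : toF (fromF Hp x) = x.
Proof. by apply: val_inj; rewrite /toF /= val_Fp_nat // modn_small // fromF_lt. Qed.

Lemma fromF_inj (p : nat) (Hp : prime p) : injective (fromF Hp).
Proof. by move=> x y e; rewrite -(toF_fromF Hp x) e toF_fromF. Qed.

Lemma toF_inj (p : nat) (Hp : prime p) : injective (@toF p).
Proof. by move=> x y e; rewrite -(fromF_toF Hp x) e fromF_toF. Qed.

Lemma toF_Bsq (p : nat) (Hp : prime p) (i j : 'I_p) :
  toF (Bsq (prime_gt0 Hp) i j) = toF i + toF j.
Proof. by rewrite /toF /Bsq /= Fp_nat_mod // natrD. Qed.

Lemma nine_ne0 (p : nat) (Hp : prime p) (Hmod : p = 1 %[mod 6]) : (9%:R : 'F_p) != 0.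
Proof.
rewrite -(dvdn_pcharf (pchar_Fp Hp)); apply/negP => d.
have le := dvdn_leq (isT : (0 < 9)%N) d.
move: Hmod => /= Hm.
have : p = 1%N \/ p = 7%N by lia.
by case=> E; subst p.
Qed.

Local Close Scope ring_scope.

Theorem theorem7p1 (p : nat) (Hprime : prime p) (Hmod : p = 1 %[mod 6]) :
  exists L : square p,
    latin L /\ orthogonal L (Bsq (prime_gt0 Hprime)) /\ has_intercalate L.
Proof.
Local Open Scope ring_scope.
have [w [h3 h1]] := omega_ex Hprime Hmod.
have hs := omega_sum h3 h1.
pose L : square p := fun i j => fromF Hprime (toF i + Fm w (toF i + toF j)).
exists L; split; [split|split].
- move=> i j1 j2 /fromF_inj /addrI /(Fm_inj h3) /addrI; exact: (@toF_inj p Hprime).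
- move=> j i1 i2 /fromF_inj e.
  have : (toF i1 + toF j) + Fm w (toF i1 + toF j) = (toF i2 + toF j) + Fm w (toF i2 + toF j).
    by rewrite -[_ + toF j + _]addrA [toF j + _]addrC addrA e addrAC -addrA [toF j + _]addrC addrA -addrA addrA.
  by move/(Gm_inj h3 h1)/addIr; exact: (@toF_inj p Hprime).
- move=> i1 j1 i2 j2 /fromF_inj e /(congr1 (@toF p)); rewrite !toF_Bsq => eb.
  move: e; rewrite eb => /addIr ei.
  have ei' := toF_inj Hprime ei; split => //.
  by move: eb; rewrite ei => /addrI /(toF_inj Hprime).
- have LE : forall a b : 'F_p, L (fromF Hprime a) (fromF Hprime b) = fromF Hprime (a + Fm w (a + b)).
    by move=> a b; rewrite /L !toF_fromF.
  have w0 := w_ne0 h3.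
  have nH : ~~ inH w (-2).
    rewrite /inH; apply/negP => /orP[/orP[]|] /eqP e; move/negP: (nine_ne0 Hprime Hmod); apply; apply/eqP.
    + have -> : (9%:R : 'F_p) = 3%:R * 3%:R by rewrite -natrM.
      have -> : (3%:R : 'F_p) = 1 - (-2) by ring.
      rewrite e.
      by rewrite subrr mul0r.
    + have -> : (9%:R : 'F_p) = w ^+ 3 - (-2) ^+ 3 by rewrite h3; ring.
      by rewrite -e subrr.
    + have -> : (9%:R : 'F_p) = (w ^+ 3) ^+ 2 - (-2) ^+ 3 by rewrite h3; ring.
      by rewrite -exprM mulnC exprM -e subrr.
  exists (fromF Hprime 0), (fromF Hprime (w - 1)), (fromF Hprime 1), (fromF Hprime (w ^+ 2)).
  rewrite !(inj_eq (@fromF_inj p Hprime)) !LE; split; [|split; [|split]].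
  + by rewrite eq_sym subr_eq0.
  + apply/negP => /eqP e; move/eqP: h1; apply.
    by rewrite -[LHS]mul1r {1}e -exprSr h3.
  + congr (fromF Hprime).
    have -> : w - 1 + w ^+ 2 = -2 by rewrite -[RHS]sub0r -hs; ring.
    rewrite /Fm (negbTE nH) /inH !add0r.
    transitivity ((w^+2 + w + 1) + (w - 1 + w * -2)); first by ring.
    by rewrite hs add0r.
  + congr (fromF Hprime).
    rewrite !add0r subrK /Fm /inH eqxx !orbT /=.
    have -> : w ^+ 2 * w ^+ 2 = w * w ^+ 3 by ring.
    rewrite eqxx orbT /=.
    have -> : w - 1 + w ^+ 2 * w = w - 1 + w ^+ 3 by ring.
    by rewrite h3 mulr1 subrK.
Qed.
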